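(* Let $n\ge 2$ and let $\dot{\mathbf x}=\mathbf f(\sigma,\mathbf x)$ be a multistable regulatory system (MSRS) as defined in the context, with $f_k(\sigma,\mathbf x)=-l(x_k)+\sigma\frac{g(x_k)}{P(x_1,\dots,x_n)+h(x_k)}$; fix $\sigma>0$ and let $\mathbf r\in\mathbb R_{>0}^n$ be an equilibrium. For $k=1,\dots,n$ let $D_k(\mathbf x)=-\frac{P(\mathbf x)+h(x_k)}{l(x_k)}$. (1) If $\mathbf r=(q,\dots,q)$ is diagonal, set $\tau=\frac{\partial f_n}{\partial x_n}(\mathbf r)$, $\xi=\frac{\partial P}{\partial x_{n-1}}(\mathbf r)/D_n(\mathbf r)$, $G_1=\tau-\xi$, $G_2=\tau+(n-1)\xi$. Then $\mathbf r$ is stable if and only if $G_1<0$ and $G_2<0$. (2),(3) Otherwise, suppose the coordinates of $\mathbf r$ take the value $p$ exactly $i$ times and the value $q\neq p$ exactly $n-i$ times with $1\le i\le\lfloor n/2\rfloor$. Let $\boldsymbol\rho=(p,\dots,p,q,\dots,q)$ ($p$ in the first $i$ coordinates), and set $\beta=\frac{\partial f_1}{\partial x_1}(\boldsymbol\rho)$, $\tau=\frac{\partial f_n}{\partial x_n}(\boldsymbol\rho)$, $\gamma=\frac{\partial P}{\partial x_2}(\boldsymbol\rho)/D_1(\boldsymbol\rho)$, $\xi=\frac{\partial P}{\partial x_{n-1}}(\boldsymbol\rho)/D_n(\boldsymbol\rho)$, $\mu=\frac{\partial P}{\partial x_n}(\boldsymbol\rho)/D_1(\boldsymbol\rho)$,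 $\nu=\frac{\partial P}{\partial x_1}(\boldsymbol\rho)/D_n(\boldsymbol\rho)$, $G_1=\tau-\xi$, $G_2=\beta-\gamma$, $G_3=\beta+\tau+(i-1)\gamma+(n-i-1)\xi$, $G_4=(\beta+(i-1)\gamma)(\tau+(n-i-1)\xi)-i(n-i)\mu\nu$. Then: (2a) if $i=1$ and $n=2$, $\mathbf r$ is stable if and only if $G_3<0$ and $G_4>0$; (2b) if $i=1$ and $n>2$, $\mathbf r$ is stable if and only if $G_1<0$, $G_3<0$ and $G_4>0$; (3) if $2\le i\le\lfloor n/2\rfloor$, $\mathbf r$ is stable if and only if $G_1<0$, $G_2<0$, $G_3<0$ and $G_4>0$.
   Context: A system of ODEs $\frac{dx_k}{dt}=f_k(\sigma,x_1,\dots,x_n)$, $k=1,\dots,n$, is called a multistable regulatory system (MSRS) if $f_k(\sigma,x_1,\dots,x_n)=-l(x_k)+\sigma\frac{g(x_k)}{P(x_1,\dots,x_n)+h(x_k)}$, where $l,g,h$ are real functions of one real variable and $P$ is a real function of $n$ real variables (all differentiable), and: (1) $\sigma$ is a positive parameter; (2) $P$ is symmetric, i.e. unchanged under interchanging any two of its arguments; (3) for every $k$ and every $(x_1,\dots,x_n)\in\mathbb R_{>0}^n$, $P(x_1,\dots,x_n)+h(x_k)>0$; (4) $l(z)\neq 0$ and for every $\sigma>0$ the function $z\mapsto \sigma\frac{g(z)}{l(z)}-h(z)$ has at most one extreme point for $z\in\mathbb R_{>0}$. For a given $\sigma$, a point $\mathbf r\in\mathbb R_{>0}^n$ is an equilibrium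 if $f_1(\sigma,\mathbf r)=\dots=f_n(\sigma,\mathbf r)=0$. An equilibrium $\mathbf r$ is stable (locally asymptotically stable) if all eigenvalues of the Jacobian matrix $J_{\mathbf f}(\mathbf r)=\left[\frac{\partial f_i}{\partial x_j}(\mathbf r)\right]_{i,j=1}^n$ have strictly negative real parts. An equilibrium is diagonal if all its coordinates are equal. *)

(* Defs.v *)
From HB Require Import structures.
From mathcomp Require Import all_boot all_order all_algebra.
From mathcomp Require Import all_classical all_reals all_analysis.
From mathcomp Require Import complex.
From mathcomp Require Import perm.
Set Implicit Arguments. Unset Strict Implicit. Unset Printing Implicit Defensive.
Import Order.TTheory GRing.Theory Num.Theory.
Import numFieldNormedType.Exports.
Local Open Scope ring_scope.

Definition pdiff (R : realType) (n : nat) (F : 'rV[R]_n -> R) (j : 'I_n)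
  (x : 'rV[R]_n) : R := 'D_(delta_mx 0 j) F x.

Definition msrs_f (R : realType) (n : nat) (l g h : R -> R)
  (P : 'rV[R]_n -> R) (sigma : R) (k : 'I_n) (x : 'rV[R]_n) : R :=
  - l (x ord0 k) + sigma * (g (x ord0 k) / (P x + h (x ord0 k))).

Definition msrs_D (R : realType) (n : nat) (l h : R -> R)
  (P : 'rV[R]_n -> R) (k : 'I_n) (x : 'rV[R]_n) : R :=
  - (P x + h (x ord0 k)) / l (x ord0 k).

Definition jacobian (R : realType) (n : nat) (F : 'I_n -> 'rV[R]_n -> R)
  (x : 'rV[R]_n) : 'M[R]_n :=
  \matrix_(i, j) pdiff (F i) j x.

(* locally asymptotically stable: all (complex) eigenvalues of the Jacobian
   have strictly negative real part *)
Definition stable_eq (R : realType) (n : nat) (F : 'I_n -> 'rV[R]_n -> R)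
  (x : 'rV[R]_n) : Prop :=
  forall z : R[i], eigenvalue (map_mx (fun a : R => (a%:C)%C) (jacobian F x)) z ->
    complex.Re z < 0.

Definition positive_vec (R : realType) (n : nat) (x : 'rV[R]_n) : Prop :=
  forall k, 0 < x ord0 k.

Definition equilibrium (R : realType) (n : nat) (F : 'I_n -> 'rV[R]_n -> R)
  (x : 'rV[R]_n) : Prop :=
  positive_vec x /\ forall k, F k x = 0.

Definition extreme_point (R : realType) (phi : R -> R) (z : R) : Prop :=
  0 < z /\
  exists e : R, 0 < e /\
    ((forall y, 0 < y -> `|y - z| < e -> phi y <= phi z) \/
     (forall y, 0 < y -> `|y - z| < e -> phi z <= phi y)).

Definition is_MSRS (R : realType) (n : nat) (l g h : R -> R)
  (P : 'rV[R]_n -> R) : Prop :=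
  [/\ (forall z, differentiable l z) /\ (forall z, differentiable g z) /\
        (forall z, differentiable h z) /\ (forall x, differentiable P x),
      (forall (i j : 'I_n) (x : 'rV[R]_n),
          P (\row_k x ord0 (tperm i j k)) = P x),
      (forall (k : 'I_n) (x : 'rV[R]_n), positive_vec x -> 0 < P x + h (x ord0 k)),
      (forall z : R, 0 < z -> l z != 0) &
      (forall sigma : R, 0 < sigma ->
         forall z1 z2 : R,
           extreme_point (fun z => sigma * (g z / l z) - h z) z1 ->
           extreme_point (fun z => sigma * (g z / l z) - h z) z2 -> z1 = z2)].

(* Main.v *)
Require Import Defs.
From HB Require Import structures.
From mathcomp Require Import all_boot all_order all_algebra.
From mathcomp Require Import all_classical all_reals all_analysis.
From mathcomp Require Import complex.
From mathcomp Require Import perm.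
From mathcomp Require Import ring lra zify.
Set Implicit Arguments. Unset Strict Implicit. Unset Printing Implicit Defensive.
Import Order.TTheory GRing.Theory Num.Theory.
Import numFieldNormedType.Exports.
Local Open Scope ring_scope.
Section S.
Variables (R : realType) (n : nat).
Definition rperm (x : 'rV[R]_n) (s : 'S_n) : 'rV[R]_n := \row_k x ord0 (s k).

Lemma P_perm (P : 'rV[R]_n -> R) :
  (forall (i j : 'I_n) (x : 'rV[R]_n), P (\row_k x ord0 (tperm i j k)) = P x) ->
  forall s x, P (rperm x s) = P x.
Proof.
move=> Ps s; have [ts -> _] := prod_tpermP s.
elim: ts => [|t ts IH] x.
  by rewrite big_nil; congr P; apply/rowP => k; rewrite !mxE perm1 (ord1 ord0).
rewrite big_cons.
have -> : rperm x (tperm t.1 t.2 * \prod_(j <- ts) tperm j.1 j.2) =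
   \row_k (rperm x (\prod_(j <- ts) tperm j.1 j.2)) ord0 (tperm t.1 t.2 k).
  by apply/rowP => k; rewrite !mxE permM.
by rewrite Ps IH.
Qed.

Lemma derive_transfer (f f' : 'rV[R]_n -> R) (x x' v v' : 'rV[R]_n) :
  (forall t : R, f (t *: v + x) = f' (t *: v' + x')) -> 'D_v f x = 'D_v' f' x'.
Proof.
move=> H; have H0 : f x = f' x'.
  by have := H 0; rewrite !scale0r !add0r.
rewrite /derive H0.
have -> : (fun h : R => h^-1 *: ((f \o shift x) (h *: v) - f' x')) =
  (fun h : R => h^-1 *: ((f' \o shift x') (h *: v') - f' x')).
  by apply/funext => t /=; rewrite H.
by [].
Qed.

Lemma rperm_shift (x : 'rV[R]_n) s j (t : R) :
  t *: delta_mx 0 j + rperm x s = rperm (t *: delta_mx 0 (s j) + x) s.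
Proof.
apply/rowP => k; rewrite !mxE (inj_eq (@perm_inj _ s)); by [].
Qed.

Lemma pdiffP_perm (P : 'rV[R]_n -> R) (HP : forall s x, P (rperm x s) = P x) s x j :
  pdiff P j (rperm x s) = pdiff P (s j) x.
Proof.
apply: derive_transfer => t; by rewrite rperm_shift HP.
Qed.

Lemma F_perm (l g h : R -> R) (P : 'rV[R]_n -> R) (HP : forall s x, P (rperm x s) = P x)
  sigma s x k : msrs_f l g h P sigma k (rperm x s) = msrs_f l g h P sigma (s k) x.
Proof. by rewrite /msrs_f HP !mxE. Qed.

Lemma D_perm (l h : R -> R) (P : 'rV[R]_n -> R) (HP : forall s x, P (rperm x s) = P x)
  s x k : msrs_D l h P k (rperm x s) = msrs_D l h P (s k) x.
Proof. by rewrite /msrs_D HP !mxE. Qed.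

Lemma pdiffF_perm (l g h : R -> R) (P : 'rV[R]_n -> R) (HP : forall s x, P (rperm x s) = P x)
  sigma s x k j :
  pdiff (msrs_f l g h P sigma k) j (rperm x s) = pdiff (msrs_f l g h P sigma (s k)) (s j) x.
Proof.
apply: derive_transfer => t; by rewrite rperm_shift F_perm.
Qed.

Lemma pdiff_eq (l g h : R -> R) (P : 'rV[R]_n -> R) sigma x k j :
  (forall x, differentiable P x) ->
  (forall y, 0 < y -> l y != 0) ->
  (forall k x, positive_vec x -> 0 < P x + h (x ord0 k)) ->
  equilibrium (msrs_f l g h P sigma) x -> j != k ->
  pdiff (msrs_f l g h P sigma k) j x = pdiff P j x / msrs_D l h P k x.
Proof.
move=> dP l0 Ph [xpos xeq] jk.
set c := h (x ord0 k).
have E : pdiff (msrs_f l g h P sigma k) j x =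
  'D_(delta_mx 0 j) (cst (- l (x ord0 k)) + (sigma * g (x ord0 k)) \*: (fun y => (P y + c)^-1)) x.
  apply: derive_transfer => t /=.
  rewrite /msrs_f !mxE eqxx /= eq_sym (negbTE jk) mulr0 add0r /c.
  by rewrite mulrA.
have Pc0 : P x + c != 0 by rewrite gt_eqF // Ph.
have dPc : derivable (fun y => P y + c) x (delta_mx 0 j).
  have -> : (fun y => P y + c) = P + cst c by [].
  apply: derivableD; first exact: diff_derivable.
  exact: derivable_cst.
rewrite E deriveD; last 2 first.
- exact: derivable_cst.
- by apply: derivableZ; apply: derivableV.
rewrite derive_cst add0r deriveZ; last by apply: derivableV.
rewrite deriveV //.
have -> : 'D_(delta_mx 0 j) (fun y => P y + c) x = pdiff P j x.
  have -> : (fun y => P y + c) = P + cst c by [].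
  rewrite deriveD; [|exact: diff_derivable|exact: derivable_cst].
  by rewrite derive_cst addr0.
have := xeq k; rewrite /msrs_f /msrs_D -/c => e.
have lk : l (x ord0 k) != 0 by apply: l0.
have -> : sigma * g (x ord0 k) = l (x ord0 k) * (P x + c).
  have el : l (x ord0 k) = sigma * (g (x ord0 k) / (P x + c)).
    by move/eqP: e; rewrite addrC subr_eq0 => /eqP <-.
  by rewrite el; field.
rewrite /= -/c.
rewrite /GRing.scale /=. field; by rewrite lk Pc0.
Qed.
End S.

Section Lin.
Variables (K : fieldType) (n : nat) (c : 'I_n -> bool) (d : bool -> K) (o : bool -> bool -> K)
  (A : 'M[K]_n).
Hypothesis HA : forall k j, A k j = if k == j then d (c k) else o (c k) (c j).

Definition Ssum (v : 'rV[K]_n) (b : bool) := \sum_(k | c k == b) v ord0 k.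

Lemma rowA (v : 'rV[K]_n) j :
  (v *m A) ord0 j = v ord0 j * (d (c j) - o (c j) (c j)) + Ssum v true * o true (c j)
     + Ssum v false * o false (c j).
Proof.
rewrite mxE.
have -> : \sum_k v ord0 k * A k j = \sum_k (v ord0 k * o (c k) (c j) +
   (if k == j then v ord0 j * (d (c j) - o (c j) (c j)) else 0)).
  apply: eq_bigr => k _; rewrite HA; case: eqP => [->|_]; first by ring.
  by rewrite addr0.
rewrite big_split /= -big_mkcond /= big_pred1_eq addrC -addrA; congr (_ + _).
rewrite (bigID (fun k => c k)) /= /Ssum; congr (_ + _).
  rewrite big_distrl /=; apply: eq_big => k; first by case: (c k).
  by move=> ->.
rewrite big_distrl /=; apply: eq_big => k; first by case: (c k).
by move/negbTE=> ->.
Qed.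

Definition nb (b : bool) : K := (#|[set k | c k == b]|)%:R.
Definition Mb (b : bool) := d b - o b b + nb b * o b b.
Definition cpz (z : K) := (z - Mb true) * (z - Mb false) - nb true * nb false * o false true * o true false.

Lemma sum_class (f : 'I_n -> K) (a : K) b : (forall k, c k == b -> f k = a) ->
  \sum_(k | c k == b) f k = nb b * a.
Proof.
move=> Hf; rewrite (eq_bigr (fun _ => a)) //.
rewrite (eq_bigl (fun k => k \in [set k | c k == b])); last by move=> k; rewrite inE.
by rewrite sumr_const /nb mulr_natl.
Qed.

Lemma eig_fwd z : eigenvalue A z ->
  (z = d true - o true true /\ (1 < #|[set k | c k == true]|)%N) \/
  (z = d false - o false false /\ (1 < #|[set k | c k == false]|)%N) \/
  cpz z = 0.
Proof.
case/eigenvalueP => v Hv v0.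
have Ej : forall j, z * v ord0 j = v ord0 j * (d (c j) - o (c j) (c j)) +
    Ssum v true * o true (c j) + Ssum v false * o false (c j).
  by move=> j; rewrite -rowA Hv mxE.
have Sb : forall b, z * Ssum v b = Ssum v b * (d b - o b b) +
    nb b * (Ssum v true * o true b + Ssum v false * o false b).
  move=> b.
  have -> : z * Ssum v b = \sum_(k | c k == b) (v ord0 k * (d b - o b b) +
       (Ssum v true * o true b + Ssum v false * o false b)).
    rewrite [in LHS]/Ssum big_distrr; apply: eq_bigr => k /eqP <-; by apply: eq_trans (Ej k) _; rewrite addrA.
  by rewrite big_split /= (sum_class (f := fun _ => Ssum v true * o true b + Ssum v false * o false b) (a := Ssum v true * o true b + Ssum v false * o false b)) // -big_distrl.
have [/andP [/eqP ST0 /eqP SF0]|Snz] :=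
   boolP ((Ssum v true == 0) && (Ssum v false == 0)).
  have [j vj] : exists j, v ord0 j != 0.
    apply/existsP; apply: contraR v0 => /existsPn H; apply/eqP/rowP => j.
    by move: (H j); rewrite negbK mxE => /eqP.
  have ez : z = d (c j) - o (c j) (c j).
    by move: (Ej j); rewrite ST0 SF0 !mul0r !addr0 mulrC => /(mulfI vj).
  have card2 : (1 < #|[set k | c k == c j]|)%N.
    rewrite ltnNge; apply/negP => Hc.
    have Sj : Ssum v (c j) = v ord0 j.
      rewrite /Ssum (bigD1 j) //= big1 ?addr0 // => k /andP [ck kj].
      exfalso; move: Hc; apply/negP; rewrite -ltnNge.
      apply: (@leq_trans #|[set j; k]|); first by rewrite cards2 eq_sym kj.
      apply: subset_leq_card; apply/fintype.subsetP => y; rewrite !inE.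
      by case/orP => /eqP ->; rewrite ?eqxx // eq_sym.
    by move: vj; rewrite -Sj; case: (c j); rewrite ?ST0 ?SF0 eqxx.
  by case: (c j) ez card2 => ez card2; [left|right; left].
right; right.
set ST := Ssum v true in Snz Sb *; set SF := Ssum v false in Snz Sb *.
have u1 : z * ST - (ST * (d true - o true true) + nb true * (ST * o true true + SF * o false true)) = 0.
  by rewrite Sb subrr.
have u2 : z * SF - (SF * (d false - o false false) + nb false * (ST * o true false + SF * o false false)) = 0.
  by rewrite Sb subrr.
have h1 : cpz z * ST = 0.
  have -> : cpz z * ST = (z - Mb false) * (z * ST - (ST * (d true - o true true) + nb true * (ST * o true true + SF * o false true)))
     + nb true * o false true * (z * SF - (SF * (d false - o false false) + nb false * (ST * o true false + SF * o false false))).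
    by rewrite /cpz /Mb; ring.
  by rewrite u1 u2 !mulr0 addr0.
have h2 : cpz z * SF = 0.
  have -> : cpz z * SF = nb false * o true false * (z * ST - (ST * (d true - o true true) + nb true * (ST * o true true + SF * o false true)))
     + (z - Mb true) * (z * SF - (SF * (d false - o false false) + nb false * (ST * o true false + SF * o false false))).
    by rewrite /cpz /Mb; ring.
  by rewrite u1 u2 !mulr0 addr0.
move: Snz; rewrite negb_and => /orP [] H.
  by move/eqP: h1; rewrite mulf_eq0 (negbTE H) orbF => /eqP.
by move/eqP: h2; rewrite mulf_eq0 (negbTE H) orbF => /eqP.
Qed.

Lemma eig_pair b : (1 < #|[set k | c k == b]|)%N -> eigenvalue A (d b - o b b).
Proof.
case/card_gt1P => a [a' [Ha Ha' aa']].
rewrite !inE in Ha Ha'; move/eqP: Ha => Ha; move/eqP: Ha' => Ha'.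
apply/eigenvalueP; exists (delta_mx 0 a - delta_mx 0 a').
  rewrite mulmxBl -!rowE; apply/rowP => j; rewrite !mxE !HA Ha Ha' /=.
  have [->|ja] := eqVneq j a.
    by rewrite (eq_sym a' a) (negbTE aa') Ha /=; ring.
  have [->|ja'] := eqVneq j a'.
    by rewrite Ha' /=; ring.
  by rewrite /=; ring.
apply/eqP => /rowP /(_ a); rewrite !mxE eqxx (negbTE aa') /= subr0 => /eqP.
by rewrite eqxx oner_eq0.
Qed.

Lemma eig_cp z al be :
  al * (z - Mb true) = nb false * o false true * be ->
  be * (z - Mb false) = nb true * o true false * al ->
  let v := \row_k (if c k then al else be) in v *m A = z *: v.
Proof.
move=> e1 e2 v.
have ST : Ssum v true = nb true * al.
  by apply: sum_class => k /eqP ck; rewrite /v mxE ck.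
have SF : Ssum v false = nb false * be.
  by apply: sum_class => k /eqP ck; rewrite /v mxE ck.
apply/rowP => j; rewrite rowA ST SF [in RHS]mxE /v !mxE.
move: e1 e2; rewrite /Mb.
case: (c j) => e1 e2.
  have e1' : al * (z - (d true - o true true + nb true * o true true)) - nb false * o false true * be = 0.
    by rewrite e1 subrr.
  by apply/eqP; rewrite eq_sym -subr_eq0; apply/eqP; rewrite -e1'; ring.
have e2' : be * (z - (d false - o false false + nb false * o false false)) - nb true * o true false * al = 0.
  by rewrite e2 subrr.
by apply/eqP; rewrite eq_sym -subr_eq0; apply/eqP; rewrite -e2'; ring.
Qed.
End Lin.
Section Q.
Variable R : realType.
Local Open Scope complex_scope.
Lemma quad_stable (T D : R) : T < 0 -> 0 < D ->
  forall z : R[i], z * z - T%:C * z + D%:C = 0 -> 0 > complex.Re z.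
Proof.
move=> T0 D0 [a b] /eqP; rewrite eq_complex /= => /andP [/eqP e1 /eqP e2].
have [b0|bn0] := eqVneq b 0.
  rewrite b0 in e1; rewrite ltNge; apply/negP => a0; nra.
have : b * (2 * a - T) = 0 by rewrite -e2; ring.
move/eqP; rewrite mulf_eq0 (negbTE bn0) /= subr_eq0 => /eqP e.
lra.
Qed.

Lemma quad_unstable (T D : R) : ~ (T < 0 /\ 0 < D) ->
  exists z : R[i], z * z - T%:C * z + D%:C = 0 /\ 0 <= complex.Re z.
Proof.
move=> nTD.
set De := T * T - 4 * D.
have [Dge|Dlt] := leP 0 De.
  have s2 := sqr_sqrtr Dge; have s0 := sqrtr_ge0 De.
  set s := Num.sqrt De in s2 s0.
  exists (((T + s) / 2)%:C); split.
    apply/eqP; rewrite eq_complex /=; apply/andP; split; apply/eqP; last by ring.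
    rewrite expr2 in s2. rewrite /De in s2. nra.
  rewrite /=; have [T0|T0] := ltP T 0; last nra.
  have : D <= 0 by rewrite leNgt; apply/negP => D0; apply: nTD.
  rewrite /De in s2; rewrite expr2 in s2; nra.
have hD : 0 <= - De by rewrite oppr_ge0 ltW.
have s2 := sqr_sqrtr hD; have s0 := sqrtr_ge0 (- De).
set s := Num.sqrt (- De) in s2 s0.
exists ((T / 2) +i* (s / 2)); split.
  apply/eqP; rewrite eq_complex /=; apply/andP; split; apply/eqP; last by field.
  rewrite /De expr2 in s2. nra.
rewrite /=; have [T0|T0] := ltP T 0; last lra.
exfalso; apply: nTD; split => //; rewrite /De in Dlt; nra.
Qed.


Lemma cD (x y : R) : (x + y)%:C = x%:C + y%:C.
Proof. by apply/eqP; rewrite eq_complex /= addr0 !eqxx. Qed.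
Lemma cN (x : R) : (- x)%:C = - x%:C.
Proof. by apply/eqP; rewrite eq_complex /= oppr0 !eqxx. Qed.
Lemma cB (x y : R) : (x - y)%:C = x%:C - y%:C.
Proof. by rewrite cD cN. Qed.
Lemma cM (x y : R) : (x * y)%:C = x%:C * y%:C.
Proof. by apply/eqP; rewrite eq_complex /= !mulr0 !mul0r subr0 addr0 !eqxx. Qed.
Lemma cnat k : (k%:R : R[i]) = (k%:R : R)%:C.
Proof.
elim: k => [|k IH]; first by [].
by rewrite -addn1 !natrD IH cD.
Qed.
Lemma cRe (x : R) : complex.Re x%:C = x. Proof. by []. Qed.

Lemma stab_struct n (c : 'I_n -> bool) (dr : bool -> R) (or : bool -> bool -> R)
  (A : 'M[R[i]]_n) :
  (forall k j, A k j = (if k == j then dr (c k) else or (c k) (c j))%:C) ->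
  (0 < #|[set k | c k == true]|)%N -> (0 < #|[set k | c k == false]|)%N ->
  let nT := (#|[set k | c k == true]|)%:R : R in
  let nF := (#|[set k | c k == false]|)%:R : R in
  let M1 := dr true - or true true + nT * or true true in
  let M2 := dr false - or false false + nF * or false false in
  (forall z, eigenvalue A z -> complex.Re z < 0) <->
  [/\ (1 < #|[set k | c k == true]|)%N -> dr true - or true true < 0,
      (1 < #|[set k | c k == false]|)%N -> dr false - or false false < 0,
      M1 + M2 < 0 &
      0 < M1 * M2 - nT * nF * or false true * or true false].
Proof.
move=> HA0 nT0 nF0 nT nF M1 M2.
pose d b := (dr b)%:C; pose o b b' := (or b b')%:C.
have HA : forall k j, A k j = if k == j then d (c k) else o (c k) (c j).
  by move=> k j; rewrite HA0; case: eqP.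
have nbE : forall b, nb (R[i]) c b = (#|[set k | c k == b]|%:R : R)%:C.
  by move=> b; rewrite /nb cnat.
have MbE : forall b, Mb c d o b = (dr b - or b b + #|[set k | c k == b]|%:R * or b b)%:C.
  by move=> b; rewrite /Mb nbE /d /o cD cB cM.
have cpE : forall z, cpz c d o z = z * z - (M1 + M2)%:C * z + (M1 * M2 - nT * nF * or false true * or true false)%:C.
  move=> z; rewrite /cpz !MbE !nbE /o /M1 /M2 /nT /nF.
  rewrite !(cD, cB, cM); ring.
split.
  move=> H.
  have H34 : (M1 + M2 < 0) /\ (0 < M1 * M2 - nT * nF * or false true * or true false).
    have [/andP [h1 h2]|nTD] := boolP (((M1 + M2) < 0) && (0 < M1 * M2 - nT * nF * or false true * or true false)).
      by split.
    exfalso.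
    have [z [ez Rz]] : exists z : R[i], z * z - (M1 + M2)%:C * z + (M1 * M2 - nT * nF * or false true * or true false)%:C = 0 /\ 0 <= complex.Re z.
      apply: quad_unstable => -[h1 h2]; move: nTD; by rewrite h1 h2.
    suff : eigenvalue A z by move/H; rewrite ltNge Rz.
    have cp0 : cpz c d o z = 0 by rewrite cpE.
    pose a := z - Mb c d o true; pose dd := z - Mb c d o false.
    pose X := nb (R[i]) c false * o false true; pose Y := nb (R[i]) c true * o true false.
    have cpa : a * dd = X * Y.
      by apply/eqP; rewrite -subr_eq0; apply/eqP; rewrite -cp0 /cpz /a /dd /X /Y; ring.
    suff [al [be [e1 [e2 nz]]]] : exists al be, al * a = X * be /\ be * dd = Y * al /\ (al != 0 \/ be != 0).
      apply/eigenvalueP; exists (\row_k if c k then al else be); first exact: eig_cp.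
      case: nz => nz.
        case/card_gt0P: nT0 => k; rewrite inE => /eqP ck.
        by apply/eqP => /rowP /(_ k); rewrite !mxE ck; apply/eqP.
      case/card_gt0P: nF0 => k; rewrite inE => /eqP ck.
      by apply/eqP => /rowP /(_ k); rewrite !mxE ck; apply/eqP.
    have [a0|an0] := eqVneq a 0; have [X0|Xn0] := eqVneq X 0.
    + have [dd0|ddn0] := eqVneq dd 0; have [Y0|Yn0] := eqVneq Y 0.
      * by exists 1, 0; rewrite a0 X0 dd0 Y0 !mulr0 !mul0r; split; [|split; [|left; exact: oner_neq0]].
      * by exists dd, Y; rewrite a0 X0 !mulr0 !mul0r; split; [|split; [rewrite mulrC|right]].
      * by exists dd, Y; rewrite a0 X0 !mulr0 !mul0r; split; [|split; [rewrite mulrC|left]].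
      * by exists dd, Y; rewrite a0 X0 !mulr0 !mul0r; split; [|split; [rewrite mulrC|left]].
    + by exists X, a; split; [rewrite mulrC|split; [rewrite cpa mulrC|left]].
    + by exists X, a; split; [rewrite mulrC|split; [rewrite cpa mulrC|right]].
    + by exists X, a; split; [rewrite mulrC|split; [rewrite cpa mulrC|left]].
  split; [| |by case: H34|by case: H34].
  - move=> /(eig_pair HA) /H; by rewrite /d /o -cB.
  - move=> /(eig_pair HA) /H; by rewrite /d /o -cB.
move=> [h1 h2 h3 h4] z /(eig_fwd HA) [[-> c2]|[[-> c2]|cp0]].
- by rewrite /d /o -cB cRe; apply: h1.
- by rewrite /d /o -cB cRe; apply: h2.
- by apply: (quad_stable h3 h4); rewrite -cpE.
Qed.

Lemma stab_diag n (A : 'M[R[i]]_n) (dd oo : R) : (1 < n)%N ->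
  (forall k j, A k j = (if k == j then dd else oo)%:C) ->
  (forall z, eigenvalue A z -> complex.Re z < 0) <->
  (dd - oo < 0 /\ dd + (n - 1)%:R * oo < 0).
Proof.
move=> n1 HA0.
pose c := fun _ : 'I_n => true. pose d := fun _ : bool => dd%:C.
pose o := fun b b' : bool => if b == b' then oo%:C else 0%R.
have HA : forall k j, A k j = if k == j then d (c k) else o (c k) (c j).
  by move=> k j; rewrite HA0; case: eqP.
have cT : #|[set k | c k == true]| = n.
  have -> : [set k | c k == true] = [set: 'I_n]%SET by apply/setP => k; rewrite !inE.
  by rewrite cardsT card_ord.
have cF : #|[set k | c k == false]| = 0%N.
  have -> : [set k | c k == false] = finset.set0 by apply/setP => k; rewrite !inE.
  by rewrite cards0.
have MT : Mb c d o true = (dd + (n - 1)%:R * oo)%:C.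
  rewrite /Mb /nb cT /d /o /= cnat -cB -cM -cD; congr (_ %:C).
  rewrite natrB; last by apply: ltnW.
  ring.
have MF : Mb c d o false = (dd - oo)%:C.
  by rewrite /Mb /nb cF /d /o /= mul0r addr0 -cB.
have cpE : forall z, cpz c d o z = (z - (dd + (n - 1)%:R * oo)%:C) * (z - (dd - oo)%:C).
  by move=> z; rewrite /cpz MT MF /o /= !mulr0 subr0.
split.
  move=> H; split.
    have := eig_pair HA (b := true); rewrite cT => /(_ n1) /H.
    by rewrite /d /o /=.
  have : eigenvalue A (Mb c d o true).
    apply/eigenvalueP; exists (\row_k if c k then 1 else 0).
      have := @eig_cp _ _ c d o A HA (Mb c d o true) 1 0; apply.
        by rewrite subrr !mulr0.
      by rewrite mul0r /o /= mulr0 mul0r.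
    apply/eqP => /rowP /(_ (Ordinal (ltnW n1))); rewrite !mxE /= => /eqP.
    by rewrite oner_eq0.
  by move/H; rewrite MT cRe.
move=> [h1 h2] z /(eig_fwd HA) [[-> c2]|[[-> c2]|cp0]].
- by rewrite /d /o /=.
- by move: c2; rewrite cF.
- move/eqP: cp0; rewrite cpE mulf_eq0 !subr_eq0 => /orP [] /eqP ->; by rewrite cRe.
Qed.
End Q.

Lemma ct (T : eqType) n (f : 'I_n -> T) x : count_mem x [tuple f k | k < n] = #|[set k | f k == x]|.
Proof.
rewrite /= /mktuple /= count_map cardE /enum_mem size_filter count_filter. apply: eq_count => k; by rewrite !inE andbT.
Qed.
Lemma cl n i : (i <= n)%N -> #|[set k : 'I_n | (k < i)%N]| = i.
Proof.
move=> H.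
have -> : [set k : 'I_n | (k < i)%N] = [set widen_ord H j | j : 'I_i].
  apply/setP => k; rewrite !inE.
  apply/idP/imsetP => [ki|[j _ ->] /=]; last exact: ltn_ord.
  by exists (Ordinal ki) => //; apply/val_inj.
rewrite card_imset ?card_ord // => a b /(congr1 val) /= => e; exact: val_inj.
Qed.

Section S2.
Variables (R : realType) (n : nat).
Lemma rperm_fix (x : 'rV[R]_n) a b : x ord0 a = x ord0 b -> rperm x (tperm a b) = x.
Proof.
move=> e; apply/rowP => k; rewrite mxE; case: tpermP => [->|->|] //.
Qed.
Lemma pdiffP_eqv (P : 'rV[R]_n -> R) (HP : forall s x, P (rperm x s) = P x) (x : 'rV[R]_n) a b :
  x ord0 a = x ord0 b -> pdiff P a x = pdiff P b x.
Proof. by move=> e; rewrite -{1}(rperm_fix e) pdiffP_perm // tpermL. Qed.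
Lemma pdiffF_eqv (l g h : R -> R) (P : 'rV[R]_n -> R) (HP : forall s x, P (rperm x s) = P x)
  sigma (x : 'rV[R]_n) a b : x ord0 a = x ord0 b ->
  pdiff (msrs_f l g h P sigma a) a x = pdiff (msrs_f l g h P sigma b) b x.
Proof. by move=> e; rewrite -{1}(rperm_fix e) pdiffF_perm // tpermL. Qed.
Lemma D_eqv (l h : R -> R) (P : 'rV[R]_n -> R) (x : 'rV[R]_n) a b : x ord0 a = x ord0 b ->
  msrs_D l h P a x = msrs_D l h P b x.
Proof. by move=> e; rewrite /msrs_D e. Qed.
End S2.

Theorem corollary1 (R : realType) (m : nat) (l g h : R -> R)
  (P : 'rV[R]_(m.+2) -> R) (sigma : R) (r : 'rV[R]_(m.+2)) :
  is_MSRS l g h P -> 0 < sigma ->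
  equilibrium (msrs_f l g h P sigma) r ->
  let F := msrs_f l g h P sigma in
  let n := m.+2 in
  (* (1) diagonal equilibrium *)
  (forall q : R, (forall k, r ord0 k = q) ->
     let tau := pdiff (F ord_max) ord_max r in
     let xi := pdiff P (inord m) r / msrs_D l h P ord_max r in
     let G1 := tau - xi in
     let G2 := tau + (n - 1)%:R * xi in
     stable_eq F r <-> (G1 < 0 /\ G2 < 0))
  /\
  (* (2),(3) two distinct values p (i times) and q (n-i times) *)
  (forall (p q : R) (i : nat), p != q -> (1 <= i)%N -> (i <= n./2)%N ->
     #|[set k | r ord0 k == p]| = i -> #|[set k | r ord0 k == q]| = (n - i)%N ->
     let rho : 'rV[R]_n := \row_k (if (k < i)%N then p else q) in
     let beta := pdiff (F ord0) ord0 rho in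
     let tau := pdiff (F ord_max) ord_max rho in
     let gamma := pdiff P (inord 1) rho / msrs_D l h P ord0 rho in
     let xi := pdiff P (inord m) rho / msrs_D l h P ord_max rho in
     let mu := pdiff P ord_max rho / msrs_D l h P ord0 rho in
     let nu := pdiff P ord0 rho / msrs_D l h P ord_max rho in
     let G1 := tau - xi in
     let G2 := beta - gamma in
     let G3 := beta + tau + (i - 1)%:R * gamma + (n - i - 1)%:R * xi in
     let G4 := (beta + (i - 1)%:R * gamma) * (tau + (n - i - 1)%:R * xi)
               - (i * (n - i))%:R * mu * nu in
     [/\ (i = 1%N -> n = 2%N -> (stable_eq F r <-> (G3 < 0 /\ 0 < G4))),
         (i = 1%N -> (2 < n)%N -> (stable_eq F r <-> [/\ G1 < 0, G3 < 0 & 0 < G4])) &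
         ((2 <= i)%N -> (stable_eq F r <-> [/\ G1 < 0, G2 < 0, G3 < 0 & 0 < G4]))]).
Proof.
move=> [[dl [dg [dh dP]]] Psym Ph l0 _] sig0 eqr F n.
have HP := P_perm Psym.
have Jeq : forall k j, j != k -> pdiff (F k) j r = pdiff P j r / msrs_D l h P k r.
  by move=> k j jk; apply: pdiff_eq.
split.
  move=> q Hq tau xi G1 G2.
  apply: stab_diag => // k j.
  rewrite !mxE; case: eqVneq => [<-|kj].
    by rewrite /tau (@pdiffF_eqv _ _ l g h P HP sigma r k ord_max) // !Hq.
  rewrite Jeq 1?eq_sym // /xi (@pdiffP_eqv _ _ P HP r j (inord m)) ?Hq //.
  by rewrite (@D_eqv _ _ l h P r k ord_max) ?Hq.
move=> p q i pq i1 ih cp cq rho beta tau gamma xi mu nu G1 G2 G3 G4.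
have i2n : (i + i <= n)%N.
  have := odd_double_half n; rewrite -addnn => e.
  move: ih; rewrite -(leq_add2r i) => ih; apply: (leq_trans ih).
  by rewrite -{2}e -(leq_add2r i) -addnA -[X in (_ <= X)%N]addnA; lia.
have rhoE : forall k, rho ord0 k = if (k < i)%N then p else q by move=> k; rewrite mxE.
have rho0 : rho ord0 ord0 = p by rewrite rhoE /= i1.
have rhoM : rho ord0 ord_max = q by rewrite rhoE /= ltnNge (_ : i <= m.+1)%N //; lia.
have allpq : forall k, r ord0 k != p -> r ord0 k = q.
  have AB : [set k | r ord0 k == p] :|: [set k | r ord0 k == q] = [set: 'I_n]%SET.
    apply/eqP; rewrite eqEcard finset.subsetT /= cardsT card_ord cardsU cp cq.
    have -> : [set k | r ord0 k == p] :&: [set k | r ord0 k == q] = finset.set0.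
      apply/setP => k; rewrite !inE; apply/negP => /andP [/eqP -> /eqP e].
      by move: pq; rewrite e eqxx.
    rewrite cards0; lia.
  move=> k kp; have : k \in [set: 'I_n]%SET by rewrite inE.
  by rewrite -AB !inE (negbTE kp) /= => /eqP.
have crho : forall x, #|[set k | rho ord0 k == x]| = #|[set k | r ord0 k == x]|.
  have Sp : [set k | rho ord0 k == p] = [set k : 'I_n | (k < i)%N].
    apply/setP => k; rewrite !inE rhoE; case: ifP => _; first by rewrite eqxx.
    by rewrite eq_sym (negbTE pq).
  have Sq : [set k | rho ord0 k == q] = ~: [set k : 'I_n | (k < i)%N].
    apply/setP => k; rewrite !inE rhoE; case: ifP => _; last by rewrite eqxx.
    by rewrite (negbTE pq).
  have cli : #|[set k : 'I_n | (k < i)%N]| = i by apply: cl; lia.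
  move=> x; have [->|xp] := eqVneq x p; first by rewrite Sp cli cp.
  have [->|xq] := eqVneq x q.
    rewrite Sq cq; have := cardsC [set k : 'I_n | (k < i)%N]; rewrite card_ord cli; lia.
  have -> : [set k | rho ord0 k == x] = finset.set0.
    apply/setP => k; rewrite !inE rhoE; case: ifP => _; by rewrite eq_sym ?(negbTE xp) ?(negbTE xq).
  have -> : [set k | r ord0 k == x] = finset.set0.
    apply/setP => k; rewrite !inE; have [e|kp] := eqVneq (r ord0 k) p.
      by rewrite e eq_sym (negbTE xp).
    by rewrite (allpq k kp) eq_sym (negbTE xq).
  by [].
have [s0 Er] : exists s0 : 'S_n, r = rperm rho s0.
  have pe : perm_eq [tuple r ord0 k | k < n] [tuple rho ord0 k | k < n].
    apply/allP => x _; move: (ct (fun k => r ord0 k) x) (ct (fun k => rho ord0 k) x).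
    by rewrite /= => -> ->; rewrite crho.
  case/tuple_permP: pe => s0 e; exists s0; apply/rowP => k.
  have e' : [tuple r ord0 k | k < n] = [tuple tnth [tuple rho ord0 k | k < n] (s0 i0) | i0 < n].
    by apply/val_inj.
  have := congr1 (fun t => tnth t k) e'; rewrite /= !tnth_mktuple => ->.
  by rewrite !mxE.
have rs : forall k, r ord0 k = rho ord0 (s0 k) by move=> k; rewrite Er mxE.
pose c := fun k => r ord0 k == p.
have cP : forall k, c k -> rho ord0 (s0 k) = p by move=> k /eqP; rewrite rs.
have cQ : forall k, ~~ c k -> rho ord0 (s0 k) = q by move=> k /allpq; rewrite rs.
pose tg := fun b : bool => if b then ord0 else (ord_max : 'I_n).
have tgE : forall k, rho ord0 (s0 k) = rho ord0 (tg (c k)).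
  move=> k; rewrite /tg; case ck: (c k); first by rewrite cP ?ck.
  by rewrite cQ ?ck.
have Jdiag : forall k, pdiff (F k) k r = if c k then beta else tau.
  move=> k; rewrite Er pdiffF_perm // (@pdiffF_eqv _ _ l g h P HP sigma rho (s0 k) (tg (c k))) ?tgE //.
  by rewrite /tg; case: (c k).
have Joff : forall k j, j != k ->
    pdiff (F k) j r = pdiff P (tg (c j)) rho / msrs_D l h P (tg (c k)) rho.
  move=> k j jk; rewrite Jeq // Er pdiffP_perm // D_perm //.
  rewrite (@pdiffP_eqv _ _ P HP rho (s0 j) (tg (c j))) ?tgE //.
  by rewrite (@D_eqv _ _ l h P rho (s0 k) (tg (c k))) ?tgE.
pose dr := fun b : bool => if b then beta else tau.
pose or := fun b b' : bool => if b then (if b' then gamma else mu) else (if b' then nu else xi).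
have HA : forall k j, (map_mx (fun a : R => (a%:C)%C) (Defs.jacobian F r)) k j =
    ((if k == j then dr (c k) else or (c k) (c j))%:C)%C.
  move=> k j; rewrite !mxE; case: eqVneq => [<-|kj]; first by rewrite Jdiag /dr; case: (c k).
  rewrite Joff 1?eq_sym //.
  case ck: (c k); case cj: (c j) => /=.
  - have i2 : (1 < i)%N.
      rewrite -cp; apply/card_gt1P; exists k, j; rewrite !inE; split => //.
    rewrite /gamma (@pdiffP_eqv _ _ P HP rho ord0 (inord 1)) //.
    by rewrite !rhoE /= inordK // i1 i2.
  - by [].
  - by [].
  - have im : (i <= m)%N.
      have : (1 < n - i)%N.
        rewrite -cq; apply/card_gt1P; exists k, j; rewrite !inE; split => //.
          by apply/eqP/allpq; exact: negbT ck.
        by apply/eqP/allpq; exact: negbT cj.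
      lia.
    rewrite /xi (@pdiffP_eqv _ _ P HP rho ord_max (inord m)) //.
    rewrite !rhoE /= inordK // ifF; last by apply/negbTE; rewrite -leqNgt; lia.
    by rewrite ifF //; apply/negbTE; rewrite -leqNgt; lia.
have nT : #|[set k | c k == true]| = i.
  rewrite -cp; have -> : [set k | c k == true] = [set k | r ord0 k == p] by apply/setP => k; rewrite !inE eqb_id.
  by [].
have nF : #|[set k | c k == false]| = (n - i)%N.
  rewrite -cq; congr #|pred_of_set _|; apply/setP => k; rewrite !inE /c.
  have [e|kp] := eqVneq (r ord0 k) p; first by rewrite e (negbTE pq).
  by rewrite (allpq k kp) !eqxx.
have nT0 : (0 < #|[set k | c k == true]|)%N by rewrite nT.
have nF0 : (0 < #|[set k | c k == false]|)%N by rewrite nF; lia.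
have key := stab_struct HA nT0 nF0; cbv zeta in key.
rewrite nT nF in key.
have key2 : stable_eq F r <-> [/\ (1 < i)%N -> G2 < 0, (1 < n - i)%N -> G1 < 0, G3 < 0 & 0 < G4].
  apply: iff_trans key _.
  rewrite /dr /or /=.
  have E3 : beta - gamma + i%:R * gamma + (tau - xi + (n - i)%:R * xi) = G3.
    rewrite /G3 [(i - 1)%:R]natrB // [(n - i - 1)%:R]natrB; last by lia.
    ring.
  have E4 : (beta - gamma + i%:R * gamma) * (tau - xi + (n - i)%:R * xi) - i%:R * (n - i)%:R * nu * mu = G4.
    rewrite /G4 [(i - 1)%:R]natrB // [(n - i - 1)%:R]natrB; last by lia.
    rewrite natrM /mu /nu; ring.
  rewrite E3 E4; exact: iff_refl.
split => [i1e n2|i1e n2|i2]; apply: iff_trans key2 _.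
- split => [[_ _ h3 h4] //|[h3 h4]]; split => // H; exfalso; lia.
- split => [[_ h1 h3 h4] //|[h1 h3 h4]]; first by split => //; apply: h1; lia.
  split => // H; exfalso; lia.
- split => [[h2 h1 h3 h4]|[h1 h2 h3 h4]].
    split => //; first by apply: h1; lia.
    exact: h2.
  by split => // _.
Qed.
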